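(* Let $\mathcal{D}=\{(\mathbf{x}_i,y_i)\}_{i\in\mathcal{D}}$ be a finite training set with inputs $\mathcal{X}=\{\mathbf{x}_i\}_{i\in\mathcal{D}}$, let $\boldsymbol{\phi}_i=\boldsymbol{\phi}(\mathbf{x}_i)\in\mathbb{R}^P$ be feature vectors, and consider the generalized linear model $f_{\mathbf{w}}^i=\boldsymbol{\phi}_i^\top\mathbf{w}$, $\mathbf{w}\in\mathbb{R}^P$. Let $A$ be the (strictly convex, differentiable) log-partition function of a scalar exponential family, $h=A'$, and define the loss $\ell(y,h(f))=-yf+A(f)$, with $\ell_i(\mathbf{w})=\ell(y_i,h(f_{\mathbf{w}}^i))$. Let $\mathcal{R}(\mathbf{w})=\tfrac12\delta\|\mathbf{w}\|^2$ with $\delta>0$, and let $$\mathbf{w}_*=\arg\min_{\mathbf{w}}\sum_{i\in\mathcal{D}}\ell_i(\mathbf{w})+\mathcal{R}(\mathbf{w}).$$ Define the K-prior with memory $\mathcal{M}=\mathcal{X}$: $$\mathcal{K}(\mathbf{w};\mathbf{w}_*,\mathcal{X})=\sum_{i\in\mathcal{X}}\ell\big(h(f_{\mathbf{w}_*}^i),h(f_{\mathbf{w}}^i)\big)+\tfrac12\delta\|\mathbf{w}-\mathbf{w}_*\|^2,$$ where $\ell(h(f_{\mathbf{w}_*}^i),h(f_{\mathbf{w}}^i))=-h(f_{\mathbf{w}_*}^i)f_{\mathbf{w}}^i+A(f_{\mathbf{w}}^i)$. Let $j\notin\mathcal{D}$ be a new example $(\mathbf{x}_j,y_j)$ and $k\in\mathcal{D}$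 an existing example, and define $$\mathbf{w}_+=\arg\min_{\mathbf{w}}\sum_{i\in\mathcal{D}\cup j}\ell_i(\mathbf{w})+\mathcal{R}(\mathbf{w}),\qquad \mathbf{w}_-=\arg\min_{\mathbf{w}}\sum_{i\in\mathcal{D}\setminus k}\ell_i(\mathbf{w})+\mathcal{R}(\mathbf{w}),$$ $$\hat{\mathbf{w}}_+=\arg\min_{\mathbf{w}}\ \ell_j(\mathbf{w})+\mathcal{K}(\mathbf{w};\mathbf{w}_*,\mathcal{X}),\qquad \hat{\mathbf{w}}_-=\arg\min_{\mathbf{w}}\ -\ell_k(\mathbf{w})+\mathcal{K}(\mathbf{w};\mathbf{w}_*,\mathcal{X}).$$ Then $\mathbf{w}_+=\hat{\mathbf{w}}_+$ and $\mathbf{w}_-=\hat{\mathbf{w}}_-$.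
   Context: All minimizations are over the parameter space $\mathbb{R}^P$. $\mathbf{w}_*$ is the base model trained on $\mathcal{D}$; the K-prior replaces the true labels $y_i$ by the base model's predictions $h(f_{\mathbf{w}_*}^i)$ and uses $\mathbf{w}_*$ as the center of the quadratic weight term. Example: for binary cross-entropy, $y\in\{0,1\}$, $A(f)=\log(1+e^f)$ and $h$ is the sigmoid. *)

(* Defs.v *)
From HB Require Import structures.
From mathcomp Require Import all_boot all_order all_algebra.
From mathcomp Require Import all_classical all_reals all_analysis.
Set Implicit Arguments. Unset Strict Implicit. Unset Printing Implicit Defensive.
Import Order.TTheory GRing.Theory Num.Theory.
Local Open Scope ring_scope.

Section Defs.
Variables (R : realType) (P : nat).

Definition dotv (u v : 'rV[R]_P) : R := \sum_(p < P) u 0 p * v 0 p.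

Definition sqnorm (u : 'rV[R]_P) : R := dotv u u.

Definition is_argmin (F : 'rV[R]_P -> R) (w : 'rV[R]_P) : Prop :=
  forall v, F w <= F v.
End Defs.

Definition strictly_convex (R : realType) (A : R -> R) : Prop :=
  forall x y t : R, x != y -> 0 < t -> t < 1 ->
    A (t * x + (1 - t) * y) < t * A x + (1 - t) * A y.

(* Main.v *)
Require Import Defs.
From HB Require Import structures.
From mathcomp Require Import all_boot all_order all_algebra.
From mathcomp Require Import all_classical all_reals all_analysis.
From mathcomp Require Import ring lra.
Import Order.TTheory GRing.Theory Num.Theory.
Local Open Scope ring_scope.
Section S.
Variables (R : realType) (P : nat).
Implicit Types (u v w : 'rV[R]_P).

Lemma dotvDr u v w : dotv u (v + w) = dotv u v + dotv u w.
Proof. by rewrite /dotv -big_split; apply: eq_bigr => p _; rewrite mxE mulrDr. Qed.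
Lemma dotvZr u a v : dotv u (a *: v) = a * dotv u v.
Proof. by rewrite /dotv mulr_sumr; apply: eq_bigr => p _; rewrite mxE mulrCA. Qed.
Lemma dotvC u v : dotv u v = dotv v u.
Proof. by rewrite /dotv; apply: eq_bigr => p _; rewrite mulrC. Qed.
Lemma dotvNr u v : dotv u (- v) = - dotv u v.
Proof. by rewrite -scaleN1r dotvZr mulN1r. Qed.
Lemma dotvDl u v w : dotv (v + w) u = dotv v u + dotv w u.
Proof. by rewrite dotvC dotvDr !(dotvC u). Qed.
Lemma dotvZl u a v : dotv (a *: v) u = a * dotv v u.
Proof. by rewrite dotvC dotvZr dotvC. Qed.
Lemma dotvNl u v : dotv (- v) u = - dotv v u.
Proof. by rewrite dotvC dotvNr dotvC. Qed.

Lemma sqnorm_ge0 u : 0 <= sqnorm u.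
Proof. by rewrite /sqnorm /dotv; apply: sumr_ge0 => p _; rewrite -expr2 sqr_ge0. Qed.

Lemma sqnorm_gt0 u : u != 0 -> 0 < sqnorm u.
Proof.
move=> /eqP nz; have [p hp] : exists p, u 0 p != 0.
  case/boolP: [exists p, u 0 p != 0] => [/existsP//|Hn]; exfalso.
  apply: nz; apply/matrixP => i q; rewrite ord1 mxE; apply/eqP.
  apply: contraNT Hn => hq; apply/existsP; by exists q.
rewrite /sqnorm /dotv (bigD1 p) //= ltr_pwDl //.
  by rewrite -expr2 exprn_even_gt0...
by apply: sumr_ge0 => q _; rewrite -expr2 sqr_ge0.
Qed.
Lemma aff_der (a c s : R) : is_derive s 1 (fun s : R => a + s * c) c.
Proof.
have -> : (fun s : R => a + s * c) = cst a + (fun s => s * c) by [].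
by apply: is_derive_eq; rewrite scaler0 !add0r; exact: mulr1.
Qed.
Lemma comp_der (A h : R -> R) (hA : forall x : R, is_derive x 1 A (h x)) (a c t : R) :
  is_derive t 1 (fun s => A (a + s * c)) (c * h (a + t * c)).
Proof.
have d1 : derivable (fun s : R => a + s * c) t 1 by have [] := aff_der a c t.
have d2 : derivable A (a + t * c) 1 by have [] := hA (a + t * c).
have dc : derivable (A \o (fun s : R => a + s * c)) t 1.
  apply/derivable1_diffP; apply: differentiable_comp; exact/derivable1_diffP.
have := derivableP dc; rewrite -derive1E derive1_comp // !derive1E.
rewrite (@derive_val _ _ _ _ _ _ _ (hA _)) (@derive_val _ _ _ _ _ _ _ (aff_der a c t)).
by rewrite mulrC.
Qed.
Lemma sum_der (T : finType) (S : {set T}) (F : T -> R -> R) (dF : T -> R) (t : R) :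
 (forall i, is_derive t 1 (F i) (dF i)) ->
 is_derive t 1 (fun s : R => \sum_(i in S) F i s) (\sum_(i in S) dF i).
Proof.
move=> hF; rewrite -fct_sumE.
elim/big_rec2: _ => [|i g d _ hg]; first exact: is_derive_cst.
exact: is_deriveD.
Qed.

Lemma quad_der (q0 q1 q2 t : R) :
  is_derive t 1 (fun s : R => q0 + s * q1 + s * (s * q2)) (q1 + 2 * t * q2).
Proof.
have -> : (fun s : R => q0 + s * q1 + s * (s * q2)) =
  cst q0 + (fun s : R => 0 + s * q1) + ((fun s : R => 0 + s * 1) * (fun s : R => 0 + s * q2)).
  by apply/funext => s; rewrite !fctE /=; ring.
apply: (is_derive_eq (is_deriveD (is_deriveD (is_derive_cst _ _ _) (aff_der 0 q1 t))
   (is_deriveM (aff_der 0 1 t) (aff_der 0 q2 t)))).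
rewrite /= /GRing.scale /=; ring.
Qed.

Lemma stationary (I : finType) (phi : I -> 'rV[R]_P) (y : I -> R) (A h : R -> R)
  (delta : R) (D : {set I}) (ws : 'rV[R]_P) :
  (forall x : R, is_derive x 1 A (h x)) ->
  is_argmin (fun w => \sum_(i in D) (- y i * dotv (phi i) w + A (dotv (phi i) w))
     + 2^-1 * delta * sqnorm w) ws ->
  forall u, \sum_(i in D) (h (dotv (phi i) ws) - y i) * dotv (phi i) u
     + delta * dotv ws u = 0.
Proof.
move=> hA hmin u.
pose a i := dotv (phi i) ws; pose c i := dotv (phi i) u.
pose k := 2^-1 * delta.
pose g := fun s : R => \sum_(i in D) ((- y i * a i + s * (- y i * c i)) + A (a i + s * c i))
   + (k * sqnorm ws + s * (k * (2 * dotv ws u)) + s * (s * (k * sqnorm u))).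
have gE : forall s, g s = (fun w => \sum_(i in D) (- y i * dotv (phi i) w + A (dotv (phi i) w))
     + 2^-1 * delta * sqnorm w) (ws + s *: u).
  move=> s /=; rewrite /g; congr (_ + _).
    apply: eq_bigr => i _; rewrite dotvDr dotvZr /a /c; ring.
  rewrite /sqnorm !dotvDr !dotvDl !dotvZr !dotvZl (dotvC u ws) /k; ring.
have gd : forall t : R, is_derive t 1 g
   (\sum_(i in D) ((- y i * c i) + c i * h (a i + t * c i)) + (k * (2 * dotv ws u) + 2 * t * (k * sqnorm u))).
  move=> t; apply: is_deriveD; last exact: quad_der.
  apply: sum_der => i; apply: is_deriveD; first exact: aff_der.
  exact: comp_der.
have g0 : is_derive (0:R) 1 g 0.
  apply: (@derive1_at_min _ g (-1) 1 0).
  - lra.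
  - by move=> t _; have [] := gd t.
  - by rewrite in_itv /= ltrN10 ltr01.
  - move=> t _; rewrite !gE scale0r addr0; exact: hmin.
have E1 := @derive_val _ _ _ _ _ _ _ g0.
have E2 := @derive_val _ _ _ _ _ _ _ (gd 0).
rewrite E1 in E2; rewrite [RHS]E2 /k /a /c; congr (_ + _).
  by apply: eq_bigr => i _; rewrite mul0r addr0; ring.
by rewrite mulr0 mul0r addr0; field.
Qed.

Lemma argmin_unique (I : finType) (phi : I -> 'rV[R]_P) (y : I -> R) (A : R -> R)
  (delta : R) (S : {set I}) (w v : 'rV[R]_P) :
  strictly_convex A -> 0 < delta ->
  is_argmin (fun x => \sum_(i in S) (- y i * dotv (phi i) x + A (dotv (phi i) x))
     + 2^-1 * delta * sqnorm x) w ->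
  is_argmin (fun x => \sum_(i in S) (- y i * dotv (phi i) x + A (dotv (phi i) x))
     + 2^-1 * delta * sqnorm x) v ->
  w = v.
Proof.
move=> hA hd hw hv; case: (eqVneq w v) => // hne; exfalso.
pose m := 2^-1 *: (w + v).
have hdm : forall i, dotv (phi i) m = 2^-1 * dotv (phi i) w + (1 - 2^-1) * dotv (phi i) v.
  by move=> i; rewrite /m dotvZr dotvDr; field.
have Hs : \sum_(i in S) (- y i * dotv (phi i) m + A (dotv (phi i) m)) <=
   2^-1 * (\sum_(i in S) (- y i * dotv (phi i) w + A (dotv (phi i) w)) +
           \sum_(i in S) (- y i * dotv (phi i) v + A (dotv (phi i) v))).
  rewrite -big_split mulr_sumr; apply: ler_sum => i _; rewrite hdm.
  set x := dotv (phi i) w; set z := dotv (phi i) v.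
  have hAx : A (2^-1 * x + (1 - 2^-1) * z) <= 2^-1 * A x + (1 - 2^-1) * A z.
    case: (eqVneq x z) => [->|hxz].
      by rewrite -mulrDl subrKC mul1r -mulrDl subrKC mul1r.
    by apply: ltW; apply: hA => //; lra.
  have -> : 2^-1 * (- y i * x + A x + (- y i * z + A z)) =
     - y i * (2^-1 * x + (1 - 2^-1) * z) + (2^-1 * A x + (1 - 2^-1) * A z) by field.
  by rewrite lerD2l.
have Hr : sqnorm m = 2^-1 * (sqnorm w + sqnorm v) - 4^-1 * sqnorm (w - v).
  by rewrite /m /sqnorm !dotvZr !dotvZl !dotvDr !dotvDl !dotvNr !dotvNl (dotvC v w); field.
have hpos : 0 < delta * sqnorm (w - v) by rewrite mulr_gt0 // sqnorm_gt0 // subr_eq0.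
have h1 := hw m; have h2 := hw v; have h3 := hv w; simpl in h1, h2, h3.
rewrite Hr in h1.
have h4 : (2^-1 : R) * delta * (2^-1 * (sqnorm w + sqnorm v) - 4^-1 * sqnorm (w - v)) =
   2^-1 * (2^-1 * delta * sqnorm w + 2^-1 * delta * sqnorm v) - 8^-1 * (delta * sqnorm (w - v)) by field.
rewrite h4 in h1.
have h8 : (0:R) < 8^-1 by rewrite invr_gt0 ltr0n.
have := mulr_gt0 h8 hpos.
lra.
Qed.
End S.

Arguments dotvC {R P}.
Arguments dotvDr {R P}.
Arguments dotvDl {R P}.
Arguments dotvNr {R P}.
Arguments dotvNl {R P}.
Arguments stationary {R P I phi y A h delta D ws}.
Arguments argmin_unique {R P I phi y A delta S w v}.

Theorem theorem1 (R : realType) (P : nat) (I : finType)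
  (phi : I -> 'rV[R]_P) (y : I -> R) (A h : R -> R) (delta : R)
  (D : {set I}) (j k : I)
  (w_star w_plus w_minus what_plus what_minus : 'rV[R]_P) :
  strictly_convex A ->
  (forall x : R, is_derive x 1 A (h x)) ->
  0 < delta ->
  j \notin D -> k \in D ->
  let f (w : 'rV[R]_P) i := dotv (phi i) w in
  let ell (i : I) (w : 'rV[R]_P) := - y i * f w i + A (f w i) in
  let Reg (w : 'rV[R]_P) := 2^-1 * delta * sqnorm w in
  let Kprior (w : 'rV[R]_P) :=
    \sum_(i in D) (- h (f w_star i) * f w i + A (f w i))
    + 2^-1 * delta * sqnorm (w - w_star) in
  is_argmin (fun w => \sum_(i in D) ell i w + Reg w) w_star ->
  is_argmin (fun w => \sum_(i in D :|: [set j]) ell i w + Reg w) w_plus ->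
  is_argmin (fun w => \sum_(i in D :\ k) ell i w + Reg w) w_minus ->
  is_argmin (fun w => ell j w + Kprior w) what_plus ->
  is_argmin (fun w => - ell k w + Kprior w) what_minus ->
  w_plus = what_plus /\ w_minus = what_minus.
Proof.
move=> hsc hA hd hjD hkD f ell Reg Kp hs hp hm hhp hhm.
have KE : forall w, Kp w = \sum_(i in D) ell i w + Reg w + 2^-1 * delta * sqnorm w_star.
  move=> w; have St := stationary hA hs w.
  rewrite /Kp /ell /Reg /f.
  have Sq : sqnorm (w - w_star) = sqnorm w - 2 * dotv w_star w + sqnorm w_star.
    by rewrite /sqnorm !dotvDr !dotvDl !dotvNr !dotvNl (dotvC w_star w); ring.
  have Sum : \sum_(i in D) (- h (dotv (phi i) w_star) * dotv (phi i) w + A (dotv (phi i) w))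
     = \sum_(i in D) (- y i * dotv (phi i) w + A (dotv (phi i) w))
       - \sum_(i in D) (h (dotv (phi i) w_star) - y i) * dotv (phi i) w.
    by rewrite -sumrB; apply: eq_bigr => i _; ring.
  rewrite Sq Sum.
  have -> : \sum_(i in D) (h (dotv (phi i) w_star) - y i) * dotv (phi i) w
     = - (delta * dotv w_star w) by lra.
  by field.
split.
  apply: (argmin_unique hsc hd hp) => v.
  have := hhp v; rewrite !KE /=.
  rewrite (finset.setUC D) !big_setU1 //=.
  rewrite /ell /Reg /f; lra.
apply: (argmin_unique hsc hd hm) => v.
have := hhm v; rewrite !KE /=.
rewrite !(big_setD1 k hkD) /=.
rewrite /ell /Reg /f; lra.
Qed.
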